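(* Let $\Gamma$ be a nonempty index set, and for each $\gamma\in\Gamma$ let $A_\gamma,B_\gamma$ be commutative groups. Put $A=\bigoplus_{\gamma}A_\gamma$ and $B=\prod_\gamma B_\gamma$, and regard each $f_\bullet=(f_\gamma)_\gamma\in\prod_\gamma B_\gamma^{A_\gamma}$ as the map $A\to B$, $(x_\gamma)_\gamma\mapsto(f_\gamma(x_\gamma))_\gamma$, so that $\prod_\gamma B_\gamma^{A_\gamma}\subseteq B^A$. Suppose that for every $\gamma\in\Gamma$, $\operatorname{Hom}(\bigoplus_{\lambda\ne\gamma}A_\lambda,B_\gamma)=\{0\}$. Then: (a) $\operatorname{fdeg}(f_\bullet)=\sup_\gamma\operatorname{fdeg}(f_\gamma)$ for all $f_\bullet=(f_\gamma)\in\prod_\gamma B_\gamma^{A_\gamma}$; (b) $\mathcal F_n(A,B)=\prod_\gamma\mathcal F_n(A_\gamma,B_\gamma)$ for every $n\in\mathbb N\cup\{-\infty\}$; (c) $\mathcal F(A,B)=\bigcup_{n<\infty}\prod_\gamma\mathcal F_n(A_\gamma,B_\gamma)\subseteq\prod_\gamma\mathcal F(A_\gamma,B_\gamma)$.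
   Context: For commutative groups $A,B$, $B^A$ denotes the commutative group (under pointwise addition) of all maps $A\to B$. For $a\in A$, the difference operator $\Delta_a:B^A\to B^A$ is $(\Delta_a f)(x)=f(x+a)-f(x)$. Let $\widetilde{\mathbb N}=\mathbb N\cup\{-\infty,\infty\}$ ($\mathbb N=\{0,1,2,\dots\}$), totally ordered with $-\infty$ least and $\infty$ greatest. The functional degree $\operatorname{fdeg}(f)\in\widetilde{\mathbb N}$ of $f\in B^A$ is: $-\infty$ if $f=0$; otherwise the least $n\in\mathbb N$ such that $\Delta_{a_1}\cdots\Delta_{a_{n+1}}f=0$ for all $a_1,\dots,a_{n+1}\in A$; and $\infty$ if no such $n$ exists. For $n\in\widetilde{\mathbb N}$, $\mathcal F_n(A,B)=\{f\in B^A:\operatorname{fdeg}(f)\le n\}$, and $\mathcal F(A,B)=\bigcup_{n<\infty}\mathcal F_n(A,B)$ (the maps of finite functional degree). *)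

(* Defs.v *)
From HB Require Import structures.
From mathcomp Require Import all_boot all_order all_algebra.
From mathcomp Require Import boolp.
From Stdlib Require List.
Set Implicit Arguments. Unset Strict Implicit. Unset Printing Implicit Defensive.
Import GRing.Theory.
Local Open Scope ring_scope.

Inductive extnat := NegInf | Fin of nat | PosInf.

Definition ext_le (x y : extnat) : Prop :=
  match x, y with
  | NegInf, _ => True
  | _, PosInf => True
  | Fin m, Fin n => (m <= n)%N
  | _, _ => False
  end.

Definition is_sup (I : Type) (S : I -> extnat) (d : extnat) : Prop :=
  (forall i, ext_le (S i) d) /\
  (forall e, (forall i, ext_le (S i) e) -> ext_le d e).

Section FDeg.
Variables (A B : Type) (addA : A -> A -> A) (subB : B -> B -> B) (zeroB : B).

Definition Delta (a : A) (f : A -> B) : A -> B := fun x => subB (f (addA x a)) (f x).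

Definition iterDelta (s : seq A) (f : A -> B) : A -> B := foldr Delta f s.

Definition vanishes (k : nat) (f : A -> B) : Prop :=
  forall s : seq A, size s = k -> iterDelta s f = (fun _ => zeroB).

Definition fdeg (f : A -> B) : extnat :=
  match pselect (f = (fun _ => zeroB)) with
  | left _ => NegInf
  | right _ =>
    match pselect (exists n : nat, vanishes n.+1 f) with
    | left h =>
        Fin (@ex_minn (fun n => `[< vanishes n.+1 f >])
               (let: ex_intro n hn := h in ex_intro _ n (asboolT hn)))
    | right _ => PosInf
    end
  end.
End FDeg.

Definition fdegZ (A B : zmodType) (f : A -> B) : extnat :=
  fdeg (fun x y : A => x + y) (fun u v : B => u - v) 0 f.

Record dsum (I : Type) (A : I -> zmodType) := DSum {
  dval :> forall i, A i;
  dsuppP : exists s : seq I, forall i, ~ List.In i s -> dval i = 0 }.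

Lemma dsum_add_proof (I : Type) (A : I -> zmodType) (x y : dsum A) :
  exists s : seq I, forall i, ~ List.In i s -> dval x i + dval y i = 0.
Proof.
case: (dsuppP x) => s1 h1; case: (dsuppP y) => s2 h2.
exists (s1 ++ s2)%list => i hi.
rewrite h1 ?h2 ?addr0 // => H; apply: hi; apply List.in_or_app; tauto.
Qed.

Definition dsum_add (I : Type) (A : I -> zmodType) (x y : dsum A) : dsum A :=
  DSum (dsum_add_proof x y).

Definition dprod (I : Type) (B : I -> zmodType) : Type := forall i, B i.
Definition dprod_sub (I : Type) (B : I -> zmodType) (u v : dprod B) : dprod B :=
  fun i => u i - v i.
Definition dprod_zero (I : Type) (B : I -> zmodType) : dprod B := fun i => 0.

Definition fdegS (I : Type) (A B : I -> zmodType) (F : dsum A -> dprod B) : extnat :=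
  fdeg (@dsum_add I A) (@dprod_sub I B) (dprod_zero B) F.

Definition prodmap (I : Type) (A B : I -> zmodType) (f : forall i, A i -> B i)
  : dsum A -> dprod B := fun x i => f i (dval x i).

Definition hom_trivial (I : Type) (A B : I -> zmodType) (g : I) : Prop :=
  forall h : dsum (fun l : {l : I | l <> g} => A (sval l)) -> B g,
    (forall x y, h (dsum_add x y) = h x + h y) -> forall x, h x = 0.

(* Main.v *)
Require Import Defs.
From mathcomp Require Import all_boot all_order all_algebra boolp.
From Stdlib Require List.
Set Implicit Arguments. Unset Strict Implicit. Unset Printing Implicit Defensive.
Import GRing.Theory.
Local Open Scope ring_scope.

Definition Pe (e : extnat) (van : nat -> Prop) : Prop :=
  match e with NegInf => van 0%N | Fin n => van n.+1 | PosInf => True end.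

Section Gen.
Variables (A B : Type) (addA : A -> A -> A) (subB : B -> B -> B) (zeroB : B).
Hypothesis subz : subB zeroB zeroB = zeroB.

Lemma van_S k f : vanishes addA subB zeroB k f -> vanishes addA subB zeroB k.+1 f.
Proof.
move=> H [|a s] //= [hs]; rewrite (H s hs) /Delta; by apply: funext => x.
Qed.

Lemma van_le k m f : (k <= m)%N -> vanishes addA subB zeroB k f -> vanishes addA subB zeroB m f.
Proof.
elim: m => [|m IH]; first by rewrite leqn0 => /eqP ->.
rewrite leq_eqVlt => /orP [/eqP -> //|]; rewrite ltnS => h H; apply: van_S; exact: IH.
Qed.

Lemma van0 f : vanishes addA subB zeroB 0 f <-> f = (fun _ => zeroB).
Proof.
split; first by move=> H; exact: (H [::]).
by move=> -> [|].
Qed.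

Lemma fdeg_le f e : ext_le (fdeg addA subB zeroB f) e <-> Pe e (fun k => vanishes addA subB zeroB k f).
Proof.
rewrite /fdeg; case: pselect => [h0|h0].
  have H0 : vanishes addA subB zeroB 0 f by apply/van0.
  by case: e => [|n|] //=; split => // _; apply: (van_le _ H0).
case: pselect => [h|h].
  case: ex_minnP => m /asboolP Hm Hmin.
  case: e => [|n|] //=.
  - by split => // /van0.
  - split; first by move=> hmn; apply: (van_le _ Hm).
    by move=> Hn; apply: Hmin; apply/asboolP.
case: e => [|n|] //=.
- by split => // /van0.
- by split => // Hn; apply: h; exists n.
Qed.
End Gen.

Section DS.
Variables (G : Type) (A B : G -> zmodType).

Lemma dsum_ext (I : Type) (C : I -> zmodType) (x y : dsum C) :
  (forall i, x i = y i) -> x = y.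
Proof.
case: x => x hx; case: y => y hy /= H.
have E : x = y by apply: functional_extensionality_dep.
subst y; congr DSum; apply: Prop_irrelevance.
Qed.

Lemma iterDelta_prod (f : forall g, A g -> B g) s x g :
  iterDelta (@dsum_add G A) (@dprod_sub G B) s (prodmap f) x g =
  iterDelta (fun u v : A g => u + v) (fun u v : B g => u - v) (map (fun a => dval a g) s) (f g) (x g).
Proof.
elim: s x => [|a s IH] x //=.
by rewrite /Delta /dprod_sub !IH.
Qed.

Definition single (g : G) (a : A g) : dsum A.
refine (@DSum G A (fun i => match pselect (i = g) with
  left e => @eq_rect_r G g A a i e | right _ => 0 end) _).
exists [:: g] => i hi; case: pselect => // e; exfalso; apply: hi; rewrite e; by left.
Defined.

Lemma single_at g (a : A g) : single a g = a.
Proof.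
rewrite /single /=; case: pselect => // e.
by rewrite (Prop_irrelevance e erefl).
Qed.

Lemma single_off g (a : A g) i : i <> g -> single a i = 0.
Proof. by move=> h; rewrite /single /=; case: pselect. Qed.

Lemma van_prod (f : forall g, A g -> B g) k :
  vanishes (@dsum_add G A) (@dprod_sub G B) (dprod_zero B) k (prodmap f) <->
  forall g, vanishes (fun u v : A g => u + v) (fun u v : B g => u - v) 0 k (f g).
Proof.
split.
- move=> H g s hs; apply: funext => a.
  have := H (map (@single g) s); rewrite size_map => /(_ hs) H'.
  have := f_equal (fun F => F (single a) g) H'.
  have Em : [seq dval b g | b <- map (@single g) s] = s.
    by rewrite -map_comp -[RHS]map_id; apply: eq_map => b /=; exact: single_at.
  by rewrite iterDelta_prod Em single_at.
- move=> H s hs; apply: funext => x; apply: functional_extensionality_dep => g.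
  by rewrite iterDelta_prod (H g) // size_map.
Qed.
End DS.

Section DS3.
Variables (G : Type) (A B : G -> zmodType) (g : G).
Definition Asub := fun l : {l : G | l <> g} => A (sval l).

Definition dzero (I : Type) (C : I -> zmodType) : dsum C.
refine (@DSum I C (fun i => 0) _). by exists [::]. Defined.

Lemma add0d (I : Type) (C : I -> zmodType) (x : dsum C) : dsum_add (dzero C) x = x.
Proof. by apply: dsum_ext => i /=; rewrite add0r. Qed.

Lemma addAd (I : Type) (C : I -> zmodType) (x y z : dsum C) :
  dsum_add x (dsum_add y z) = dsum_add (dsum_add x y) z.
Proof. by apply: dsum_ext => i /=; rewrite addrA. Qed.

Lemma const_van k (H : hom_trivial A B g) (Gf : dsum Asub -> B g) :
  vanishes (@dsum_add _ Asub) (fun u v : B g => u - v) 0 k Gf ->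
  forall x c, Gf (dsum_add x c) = Gf x.
Proof.
elim: k Gf => [|k IH] Gf.
  by move/van0 => -> .
move=> HV.
have HD : forall c, forall x d, Delta (@dsum_add _ Asub) (fun u v : B g => u - v) c Gf (dsum_add x d)
   = Delta (@dsum_add _ Asub) (fun u v : B g => u - v) c Gf x.
  move=> c; apply: IH => s hs.
  have := HV (rcons s c); rewrite size_rcons hs => /(_ erefl).
  by rewrite /iterDelta foldr_rcons.
pose h c := Delta (@dsum_add _ Asub) (fun u v : B g => u - v) c Gf (dzero Asub).
have hadd : forall c d, h (dsum_add c d) = h c + h d.
  move=> c d; rewrite /h /Delta.
  have := HD d (dzero Asub) c; rewrite /Delta => E.
  rewrite addAd.
  have -> : Gf (dsum_add (dsum_add (dzero Asub) c) d) =
            (Gf (dsum_add (dzero Asub) d) - Gf (dzero Asub)) + Gf (dsum_add (dzero Asub) c).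
    by rewrite -E subrK.
  by rewrite [RHS]addrC addrA.
have h0 := H h hadd.
move=> x c; apply/eqP; rewrite -subr_eq0; apply/eqP.
have := HD c (dzero Asub) x; rewrite add0d /Delta => ->.
exact: h0.
Qed.
End DS3.

Section DS4.
Variables (G : Type) (A B : G -> zmodType) (g : G).

Definition ext0 (c : dsum (@Asub _ A g)) : dsum A.
refine (@DSum G A (fun i => match pselect (i = g) with
  left _ => 0 | right h => c (exist _ i h) end) _).
case: (dsuppP c) => s hs; exists (map sval s) => i hi.
case: pselect => // h; apply: (hs (exist _ i h)) => hin; apply: hi.
exact: (List.in_map sval _ _ hin).
Defined.

Definition phi (i : G) : option {l : G | l <> g} :=
  match pselect (i <> g) with left h => Some (exist _ i h) | right _ => None end.

Lemma in_pmap (l : {l : G | l <> g}) s : List.In (sval l) s -> List.In l (pmap phi s).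
Proof.
elim: s => [|a s IH] //= [E|hin].
  clear IH.
  subst a; rewrite /phi; case: pselect => h /=; last by case: (h (svalP l)).
  left; move: h; case: l => l hl h /=; congr exist; apply: Prop_irrelevance.
case: (phi a) => [y|] /=; last exact: IH.
right; exact: IH.
Qed.

Definition res (x : dsum A) : dsum (@Asub _ A g).
refine (@DSum _ (@Asub _ A g) (fun l => x (sval l)) _).
case: (dsuppP x) => s hs; exists (pmap phi s) => l hl.
apply: hs => hin; apply: hl; exact: in_pmap.
Defined.

Lemma ext0_add c d : ext0 (dsum_add c d) = dsum_add (ext0 c) (ext0 d).
Proof. apply: dsum_ext => i /=; case: pselect => //= _; by rewrite addr0. Qed.

Lemma decomp (x : dsum A) : x = dsum_add (single (x g)) (ext0 (res x)).
Proof.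
apply: dsum_ext => i /=; case: pselect => [e|h] /=.
  subst i; rewrite addr0.
  by [].
by rewrite add0r.
Qed.

Lemma iterDelta_ext0 (F : dsum A -> dprod B) y s c :
  iterDelta (@dsum_add _ (@Asub _ A g)) (fun u v : B g => u - v) s (fun c => F (dsum_add y (ext0 c)) g) c
  = iterDelta (@dsum_add _ A) (@dprod_sub _ B) (map ext0 s) F (dsum_add y (ext0 c)) g.
Proof.
elim: s c => [|d s IH] c //=.
by rewrite /Delta /dprod_sub !IH ext0_add addAd.
Qed.

Lemma key k (H : hom_trivial A B g) (F : dsum A -> dprod B) :
  vanishes (@dsum_add _ A) (@dprod_sub _ B) (dprod_zero B) k F ->
  forall x, F x g = F (single (x g)) g.
Proof.
move=> HV x.
pose Gf c := F (dsum_add (single (x g)) (ext0 c)) g.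
have HG : vanishes (@dsum_add _ (@Asub _ A g)) (fun u v : B g => u - v) 0 k Gf.
  move=> s hs; apply: funext => c; rewrite /Gf iterDelta_ext0 HV //.
  by rewrite size_map.
have := const_van H HG (dzero _) (res x); rewrite /Gf add0d -(decomp x) => ->.
congr (F _ g); apply: dsum_ext => i /=.
by case: pselect => [e|e] /=; rewrite addr0.
Qed.
End DS4.

Lemma ext_le_refl e : ext_le e e.
Proof. by case: e => //= n; rewrite leqnn. Qed.

Lemma fdegZ_le (A B : zmodType) (f : A -> B) e :
  ext_le (fdegZ f) e <-> Pe e (fun k => vanishes (fun x y : A => x + y) (fun u v : B => u - v) 0 k f).
Proof. by apply: fdeg_le; rewrite subrr. Qed.

Lemma fdegS_le (I : Type) (A B : I -> zmodType) (F : dsum A -> dprod B) e :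
  ext_le (fdegS F) e <-> Pe e (fun k => vanishes (@dsum_add I A) (@dprod_sub I B) (dprod_zero B) k F).
Proof.
apply: fdeg_le; apply: functional_extensionality_dep => i.
by rewrite /dprod_sub /dprod_zero subrr.
Qed.

Lemma Pe_prod (I : Type) (A B : I -> zmodType) (f : forall g, A g -> B g) e :
  Pe e (fun k => vanishes (@dsum_add I A) (@dprod_sub I B) (dprod_zero B) k (prodmap f)) <->
  forall g, Pe e (fun k => vanishes (fun x y : A g => x + y) (fun u v : B g => u - v) 0 k (f g)).
Proof. case: e => [|n|] /=; try exact: van_prod. by []. Qed.

Lemma struct (I : Type) (A B : I -> zmodType) k (H : forall g, hom_trivial A B g)
  (F : dsum A -> dprod B) :
  vanishes (@dsum_add I A) (@dprod_sub I B) (dprod_zero B) k F ->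
  F = prodmap (fun g (a : A g) => F (single a) g).
Proof.
move=> HV; apply: funext => x; apply: functional_extensionality_dep => g.
exact: (key (H g) HV).
Qed.

Theorem theorem3 (Γ : Type) (A B : Γ -> zmodType) (hne : inhabited Γ)
  (hHom : forall g : Γ, hom_trivial A B g) :
  (* (a) *)
  (forall f : forall g, A g -> B g,
     is_sup (fun g => fdegZ (f g)) (fdegS (prodmap f)))
  /\
  (* (b) F_n(A,B) = ∏ F_n(A_g,B_g) for n ∈ N ∪ {-oo} *)
  (forall n : extnat, n <> PosInf ->
     forall F : dsum A -> dprod B,
       ext_le (fdegS F) n <->
       exists f : forall g, A g -> B g,
         F = prodmap f /\ forall g, ext_le (fdegZ (f g)) n)
  /\
  (* (c) F(A,B) = ⋃_{n<oo} ∏ F_n(A_g,B_g) ⊆ ∏ F(A_g,B_g) *)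
  (forall F : dsum A -> dprod B,
     ((exists n : extnat, n <> PosInf /\ ext_le (fdegS F) n) <->
      (exists n : extnat, n <> PosInf /\
         exists f : forall g, A g -> B g,
           F = prodmap f /\ forall g, ext_le (fdegZ (f g)) n))
     /\
     ((exists n : extnat, n <> PosInf /\
         exists f : forall g, A g -> B g,
           F = prodmap f /\ forall g, ext_le (fdegZ (f g)) n) ->
      exists f : forall g, A g -> B g,
        F = prodmap f /\
        forall g, exists m : extnat, m <> PosInf /\ ext_le (fdegZ (f g)) m)).
Proof.
have partb : forall n : extnat, n <> PosInf ->
     forall F : dsum A -> dprod B,
       ext_le (fdegS F) n <->
       exists f : forall g, A g -> B g,
         F = prodmap f /\ forall g, ext_le (fdegZ (f g)) n.
  move=> n hn F; split.
  - move/fdegS_le => HP.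
    have [k Hk] : exists k, vanishes (@dsum_add _ A) (@dprod_sub _ B) (dprod_zero B) k F.
      by case: n hn HP => [|m|] // _ HP; eexists; exact: HP.
    pose f0 := fun g (a : A g) => F (single a) g.
    have EF : F = prodmap f0 := struct hHom Hk.
    have HP' : Pe n (fun k => vanishes (@dsum_add _ A) (@dprod_sub _ B) (dprod_zero B) k (prodmap f0)).
      by rewrite -EF.
    exists f0; split; first exact: EF.
    move=> g; apply/fdegZ_le; move/Pe_prod: HP'; exact.
  - case=> f [-> Hf]; apply/fdegS_le; apply/Pe_prod => g; apply/fdegZ_le; exact: Hf.
split.
  move=> f; split.
  - move=> g; apply/fdegZ_le.
    have := (proj1 (fdegS_le (prodmap f) (fdegS (prodmap f))) (ext_le_refl _)).
    by move/Pe_prod; apply.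
  - move=> e He; apply/fdegS_le; apply/Pe_prod => g; apply/fdegZ_le; exact: He.
split; first exact: partb.
move=> F; split.
  split.
  - case=> n [hn H]; exists n; split => //; exact/(partb n hn).
  - case=> n [hn H]; exists n; split => //; exact/(partb n hn).
case=> n [hn [f [Ef Hf]]]; exists f; split => // g; exists n; split => //.
Qed.
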